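(* Let $m,n$ be positive integers with $m \neq n$ and $\gcd(m,n) > 1$. Then $K_m \otimes K_n$ is not a circulant graph.
   Context: Graphs have no multiple edges but may have loops. The tensor product $G \otimes H$ of graphs $G$ and $H$ has vertex set $V(G)\times V(H)$, with $(g,h)$ adjacent to $(g',h')$ if and only if $g$ is adjacent to $g'$ in $G$ and $h$ is adjacent to $h'$ in $H$. For an integer $n\ge 1$ and a set $S$ of integers, the circulant graph $C_nS$ has vertex set $\{0,1,\dots,n-1\}$, with $i$ adjacent to $j$ if and only if $i-j \equiv \pm s \pmod n$ for some $s\in S$. A graph is circulant if it is isomorphic to some $C_nS$; equivalently, if its automorphism group contains a cyclic subgroup acting transitively on the vertices. $K_n$ denotes the complete graph on $n$ vertices (no loops). *)

(* Defs.v *)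
From mathcomp Require Import all_boot all_order all_algebra.
Set Implicit Arguments. Unset Strict Implicit. Unset Printing Implicit Defensive.
Import GRing.Theory Num.Theory.

(* A graph (no multiple edges, loops allowed) on a finite vertex type:
   a symmetric adjacency relation (in Prop). *)

Definition complete_adj (n : nat) (i j : 'I_n) : Prop := i <> j.

Definition tensor_adj (U V : Type) (eG : U -> U -> Prop) (eH : V -> V -> Prop)
  (x y : U * V) : Prop := eG x.1 y.1 /\ eH x.2 y.2.

Definition circulant_adj (n : nat) (S : int -> Prop) (i j : 'I_n) : Prop :=
  exists s : int, S s /\
    ((((i%:Z - j%:Z) - s) %% n%:Z)%Z = 0 \/ (((i%:Z - j%:Z) + s) %% n%:Z)%Z = 0).

Definition is_circulant (V : finType) (e : V -> V -> Prop) : Prop :=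
  exists (n : nat) (S : int -> Prop) (f : 'I_n -> V),
    bijective f /\ forall i j : 'I_n, circulant_adj S i j <-> e (f i) (f j).

(* Main.v *)
Require Import Defs.
From mathcomp Require Import all_boot all_order all_algebra.
Set Implicit Arguments. Unset Strict Implicit. Unset Printing Implicit Defensive.

Section Pres.
Variables (A B : finType).
Definition Tb (u v : A * B) : bool := (u.1 != v.1) && (u.2 != v.2).
Definition Nb (u : A * B) : {set A * B} := [set w | ~~ Tb u w].

Lemma card_row (u v : A * B) : u.1 = v.1 -> u != v -> #|Nb u :&: Nb v| = #|B|.
Proof.
move=> e1 nuv.
have -> : Nb u :&: Nb v = setX [set u.1] [set: B].
  apply/setP => w; rewrite !inE /Tb !negb_and !negbK.
  case: u v e1 nuv => [a b] [a' b'] /= <- nuv.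
  case: w => x y /=.
  case: (eqVneq a x) => [e|nx] /=; first by subst; rewrite ?eqxx.
  case: (eqVneq b y) => [e|ny] /=; last by [].
  subst; apply/negbTE; apply: contra nuv => /eqP e; by rewrite e.
by rewrite cardsX cards1 cardsT mul1n.
Qed.

Lemma card_col (u v : A * B) : u.2 = v.2 -> u != v -> #|Nb u :&: Nb v| = #|A|.
Proof.
move=> e1 nuv.
have -> : Nb u :&: Nb v = setX [set: A] [set u.2].
  apply/setP => w; rewrite !inE /Tb !negb_and !negbK.
  case: u v e1 nuv => [a b] [a' b'] /= <- nuv.
  case: w => x y /=.
  case: (eqVneq b y) => [e|ny] /=; first by subst; rewrite ?eqxx ?orbT.
  rewrite ?orbF.
  case: (eqVneq a x) => [e|nx] /=; last by [].
  subst; apply/negbTE; apply: contra nuv => /eqP e; by rewrite e.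
by rewrite cardsX cards1 cardsT muln1.
Qed.

Variable phi : A * B -> A * B.
Hypothesis phi_inj : injective phi.
Hypothesis phiT : forall u v, Tb (phi u) (phi v) = Tb u v.
Hypothesis cardAB : #|A| <> #|B|.

Lemma card_N (u v : A * B) : #|Nb (phi u) :&: Nb (phi v)| = #|Nb u :&: Nb v|.
Proof.
rewrite -(card_preimset (Nb (phi u) :&: Nb (phi v)) phi_inj).
by apply: eq_card => w; rewrite !inE !phiT.
Qed.

Lemma pres1 u v : u.1 = v.1 -> (phi u).1 = (phi v).1.
Proof.
move=> e1; case: (eqVneq u v) => [-> //|nuv].
have nphi : phi u != phi v by apply: contra nuv => /eqP/phi_inj ->.
have T0 : Tb (phi u) (phi v) = false by rewrite phiT /Tb e1 eqxx.
move: T0; rewrite /Tb; case: eqP => //= _ /negbFE /eqP e2.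
have := card_N u v; rewrite (card_col e2 nphi) (card_row e1 nuv) => h.
by case: cardAB.
Qed.

Lemma pres2 u v : u.2 = v.2 -> (phi u).2 = (phi v).2.
Proof.
move=> e1; case: (eqVneq u v) => [-> //|nuv].
have nphi : phi u != phi v by apply: contra nuv => /eqP/phi_inj ->.
have T0 : Tb (phi u) (phi v) = false by rewrite phiT /Tb e1 eqxx andbF.
move: T0; rewrite /Tb; case: (eqVneq (phi u).1 (phi v).1) => /= [e2 _|_ /negbFE/eqP //].
have := card_N u v; rewrite (card_row e2 nphi) (card_col e1 nuv) => h.
by case: cardAB.
Qed.
End Pres.

From mathcomp Require Import zify.

Lemma iter_order_mul (T : finType) (f : T -> T) (x : T) k :
  injective f -> iter (k * order f x) f x = x.
Proof.
move=> injf; elim: k => [//|k IH].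
by rewrite mulSn iterD IH iter_order.
Qed.

Lemma iter_ordS_val N (i : 'I_N) k : val (iter k (@ordS N) i) = (i + k) %% N.
Proof.
elim: k => [|k IH] /=; first by rewrite addn0 modn_small.
by rewrite IH -[(_ %% N).+1]addn1 modnDml addn1 addnS.
Qed.

Lemma lcm_small m n p q : 0 < p -> 0 < q -> p <= m -> q <= n -> 1 < gcdn m n ->
  lcmn p q < m * n.
Proof.
move=> p0 q0 pm qn g1.
have h : lcmn p q <= p * q.
  apply: dvdn_leq; first by rewrite muln_gt0 p0 q0.
  by rewrite dvdn_lcm dvdn_mulr // dvdn_mull.
have pq : p * q <= m * n by apply: leq_mul.
case: (eqVneq p m) => [ep|np]; first case: (eqVneq q n) => [eq|nq].
- subst; have := muln_lcm_gcd m n.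
  have lpos : 0 < lcmn m n by rewrite lcmn_gt0 p0 q0.
  move: (lcmn m n) (gcdn m n) g1 lpos => l g g1 lpos e.
  by rewrite -e -[X in X < _]muln1 ltn_mul2l g1 lpos.
- apply: leq_ltn_trans h _; rewrite ep ltn_pmul2l //; first by rewrite ltn_neqAle nq.
  by rewrite -ep.
- apply: leq_ltn_trans h _; apply: leq_ltn_trans (_ : p * n < m * n).
    by rewrite leq_pmul2l.
  rewrite ltn_pmul2r ?(leq_trans q0 qn) // ltn_neqAle np /=. exact: pm.
Qed.

Lemma shift_mod N (x y : 'I_N) (t : int) :
  ((((ordS x)%:Z - (ordS y)%:Z) + t) %% N%:Z)%Z = (((x%:Z - y%:Z) + t) %% N%:Z)%Z.
Proof.
have E : (((ordS x)%:Z - (ordS y)%:Z) %% N%:Z)%Z = ((x%:Z - y%:Z) %% N%:Z)%Z.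
  rewrite /= -!modz_nat modzDml -modzDmr modzNm modzDmr.
  congr (_ %% _)%Z.
  by rewrite !intS GRing.opprD GRing.addrACA GRing.subrr GRing.add0r.
by rewrite -modzDml E modzDml.
Qed.

Theorem lemma3 (m n : nat) :
  0 < m -> 0 < n -> m <> n -> 1 < gcdn m n ->
  ~ is_circulant (tensor_adj (@complete_adj m) (@complete_adj n)).
Proof.
move=> hm hn hmn hg [N [S [f [[g fK gK] Hf]]]].
have cardN : N = m * n.
  by have := bij_eq_card (Bijective fK gK); rewrite card_ord card_prod !card_ord.
have N0 : 0 < N by rewrite cardN muln_gt0 hm hn.
have HT : forall u v : 'I_m * 'I_n,
    tensor_adj (@complete_adj m) (@complete_adj n) u v <-> Tb u v.
  move=> u v; rewrite /tensor_adj /complete_adj /Tb; split.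
    by case=> /eqP a /eqP b; rewrite a b.
  by case/andP=> /eqP a /eqP b.
have Hshift : forall i j : 'I_N, circulant_adj S (ordS i) (ordS j) <-> circulant_adj S i j.
  move=> i j; rewrite /circulant_adj; split; case=> s [Ss h]; exists s; split => //.
    by rewrite !shift_mod in h.
  by rewrite !shift_mod.
pose phi := fun u => f (ordS (g u)).
have phiT : forall u v, Tb (phi u) (phi v) = Tb u v.
  move=> u v; apply/idP/idP => h.
    apply/HT; rewrite -(gK u) -(gK v); apply/Hf; apply/Hshift; apply/Hf; exact/HT.
  apply/HT; apply/Hf; apply/Hshift; apply/Hf; rewrite !gK; exact/HT.
have phi_inj : injective phi.
  by move=> u v /(can_inj fK)/ordS_inj/(can_inj gK).
have cardAB : #|'I_m| <> #|'I_n| by rewrite !card_ord.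
have [psi phiK psiK] := injF_bij phi_inj.
have psi_inj : injective psi := can_inj psiK.
have psiT : forall u v, Tb (psi u) (psi v) = Tb u v.
  by move=> u v; rewrite -phiT !psiK.
pose b0 : 'I_n := Ordinal hn.
pose a0 : 'I_m := Ordinal hm.
pose al := fun a => (phi (a, b0)).1.
pose be := fun b => (phi (a0, b)).2.
have phiE : forall u, phi u = (al u.1, be u.2).
  move=> [a b]; rewrite [LHS]surjective_pairing; congr pair.
    exact: (pres1 phi_inj phiT cardAB).
  exact: (pres2 phi_inj phiT cardAB).
have al_inj : injective al.
  move=> a a' h.
  have := pres1 psi_inj psiT cardAB h; rewrite !phiK; by [].
have be_inj : injective be.
  move=> b b' h.
  have := pres2 psi_inj psiT cardAB h; rewrite !phiK; by [].
have iterE : forall k u, iter k phi u = (iter k al u.1, iter k be u.2).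
  elim=> [[a b] //|k IH u]; by rewrite iterS IH phiE.
have iterF : forall k i, iter k phi (f i) = f (iter k (@ordS N) i).
  elim=> [//|k IH i]; by rewrite iterS IH /phi fK.
pose i0 : 'I_N := Ordinal N0.
pose u0 := f i0.
pose p := order al u0.1.
pose q := order be u0.2.
pose L := lcmn p q.
have Lal : iter L al u0.1 = u0.1.
  by rewrite /L -(divnK (dvdn_lcml p q)) iter_order_mul.
have Lbe : iter L be u0.2 = u0.2.
  by rewrite /L -(divnK (dvdn_lcmr p q)) iter_order_mul.
have LL : iter L (@ordS N) i0 = i0.
  apply: (can_inj fK); by rewrite -iterF iterE -/u0 Lal Lbe -surjective_pairing.
have := congr1 val LL; rewrite iter_ordS_val /= add0n.
have Lpos : 0 < L by rewrite lcmn_gt0 !order_gt0.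
have Lsm : L < N.
  rewrite cardN; apply: lcm_small => //; try exact: order_gt0.
    by have := max_card (fconnect al u0.1); rewrite card_ord.
  by have := max_card (fconnect be u0.2); rewrite card_ord.
by rewrite modn_small // => e; move: Lpos; rewrite e.
Qed.
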